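(* Consider the lasso problem $\min_{\boldsymbol\beta\in\mathbb{R}^p}\frac{1}{2n}\|\mathbf{y}-\mathbf{X}\boldsymbol\beta\|^2+\lambda\|\boldsymbol\beta\|_1$ at a given $\lambda$, and suppose it is strictly convex, so that the sequence of iterates produced by an iterative algorithm $a(\cdot)$ (such as coordinate descent) converges to the unique global optimum $\widehat{\boldsymbol\beta}(\lambda)$. Then the algorithm $a(\cdot)$ combined with hybrid safe-strong rule (HSSR) screening converges to the same solution $\widehat{\boldsymbol\beta}(\lambda)$.
   Context: Here $\mathbf{y}\in\mathbb{R}^n$, $\mathbf{X}=(\mathbf{x}_1,\ldots,\mathbf{x}_p)\in\mathbb{R}^{n\times p}$, $\|\cdot\|$ is the Euclidean norm and $\|\cdot\|_1$ the $\ell_1$ norm. The lasso is solved over a decreasing sequence $\lambda_1>\lambda_2>\cdots>\lambda_K$, and $\widehat{\boldsymbol\beta}(\lambda_k)$ is the solution at $\lambda_k$, with residual $\mathbf{r}(\lambda_k)=\mathbf{y}-\mathbf{X}\widehat{\boldsymbol\beta}(\lambda_k)$. A safe rule is a screening rule that only discards features $j$ for which $\widehat{\beta}_j(\lambda_{k+1})=0$ is guaranteed; let $\mathcal{S}_{k+1}$ (the safe set) be the set of features not discarded by the safe rule at $\lambda_{k+1}$. The hybrid safe-strong rule (HSSR) discards feature $j$ at $\lambda_{k+1}$ if $j\in\mathcal{S}_{k+1}^c\cup\{j\in\mathcal{S}_{k+1}:|\mathbf{x}_j^T\mathbf{r}(\lambda_k)|/n<2\lambda_{k+1}-\lambda_k\}$.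 Running an algorithm with HSSR screening means: the algorithm is run only over the features not discarded by HSSR; after convergence, the KKT conditions of the lasso ($\mathbf{x}_j^T\mathbf{r}(\lambda)/n=\lambda\,\mathrm{sign}(\widehat\beta_j)$ if $\widehat\beta_j\neq0$, $|\mathbf{x}_j^T\mathbf{r}(\lambda)/n|\le\lambda$ if $\widehat\beta_j=0$) are checked for the features in the safe set that were discarded by the strong-rule part; any violating features are added back and the algorithm is rerun (warm-started), repeating until no violations occur. *)

(* Defs.v *)
From HB Require Import structures.
From mathcomp Require Import all_boot all_order all_algebra.
From mathcomp Require Import all_classical all_reals all_analysis.
Set Implicit Arguments. Unset Strict Implicit. Unset Printing Implicit Defensive.
Import Order.TTheory GRing.Theory Num.Theory.
Import numFieldNormedType.Exports.
Local Open Scope ring_scope.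
Local Open Scope classical_set_scope.

Section Lasso.
Variables (R : realType) (n p : nat).
Implicit Types (X : 'M[R]_(n, p)) (y : 'cV[R]_n) (b : 'cV[R]_p) (A : {set 'I_p}).

Definition xtr X (r : 'cV[R]_n) (j : 'I_p) : R := \sum_(i < n) X i j * r i 0.

Definition resid X y b : 'cV[R]_n := y - X *m b.

Definition lasso_obj X y (lam : R) b : R :=
  (\sum_(i < n) (resid X y b i 0) ^+ 2) / (2 * n%:R)
  + lam * \sum_(j < p) `|b j 0|.

Definition lasso_strictly_convex X y (lam : R) : Prop :=
  forall b1 b2 : 'cV[R]_p, b1 != b2 -> forall t : R, 0 < t < 1 ->
    lasso_obj X y lam (t *: b1 + (1 - t) *: b2)
    < t * lasso_obj X y lam b1 + (1 - t) * lasso_obj X y lam b2.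

Definition supported_on A b : Prop := forall j, j \notin A -> b j 0 = 0.

Definition restricted_strictly_convex X y (lam : R) A : Prop :=
  forall b1 b2 : 'cV[R]_p, supported_on A b1 -> supported_on A b2 ->
    b1 != b2 -> forall t : R, 0 < t < 1 ->
    lasso_obj X y lam (t *: b1 + (1 - t) *: b2)
    < t * lasso_obj X y lam b1 + (1 - t) * lasso_obj X y lam b2.

Definition lasso_solution X y (lam : R) b : Prop :=
  forall b', lasso_obj X y lam b <= lasso_obj X y lam b'.

Definition restricted_solution X y (lam : R) A b : Prop :=
  supported_on A b /\
  forall b', supported_on A b' -> lasso_obj X y lam b <= lasso_obj X y lam b'.

(* An iterative algorithm a(.): run over the features in A from the warm
   start b0, it produces the sequence of iterates  algo A b0 : nat -> 'cV_p. *)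
Definition algorithm := {set 'I_p} -> 'cV[R]_p -> nat -> 'cV[R]_p.

Definition converges_when_strictly_convex (a : algorithm) X y (lam : R) : Prop :=
  forall A b0, restricted_strictly_convex X y lam A ->
    exists2 bA, restricted_solution X y lam A bA & a A b0 @ \oo --> bA.

Definition kkt_ok X y (lam : R) b (j : 'I_p) : bool :=
  if b j 0 != 0 then xtr X (resid X y b) j / n%:R == lam * Num.sg (b j 0)
  else `|xtr X (resid X y b) j / n%:R| <= lam.

(* HSSR: features kept at lam_{k+1} = lam, given the safe set S and the
   previous solution bprev = betahat(lam_k) :
   j is discarded iff j \notin S or |x_j^T r(lam_k)|/n < 2 lam - lamk. *)
Definition hssr_kept X y (lam lamk : R) (bprev : 'cV[R]_p) (S : {set 'I_p})
  : {set 'I_p} :=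
  [set j in S | ~~ (`|xtr X (resid X y bprev) j| / n%:R < 2 * lam - lamk)].

(* KKT violators among the safe-set features not currently in the working
   set A (i.e. those discarded by the strong-rule part) *)
Definition kkt_violators X y (lam : R) (S A : {set 'I_p}) b : {set 'I_p} :=
  [set j in S :\: A | ~~ kkt_ok X y lam b j].

(* hssr_run a X y lam S A b out : running algorithm a with HSSR screening,
   starting from working set A and warm start b, converges and ends
   (no more KKT violations) with output out. *)
Inductive hssr_run (a : algorithm) X y (lam : R) (S : {set 'I_p})
  : {set 'I_p} -> 'cV[R]_p -> 'cV[R]_p -> Prop :=
| hssr_stop A b b' :
    a A b @ \oo --> b' ->
    kkt_violators X y lam S A b' = finset.set0 ->
    hssr_run a X y lam S A b b'
| hssr_rerun A b b' out :
    a A b @ \oo --> b' ->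
    kkt_violators X y lam S A b' != finset.set0 ->
    hssr_run a X y lam S (A :|: kkt_violators X y lam S A b') b' out ->
    hssr_run a X y lam S A b out.

End Lasso.

(* Main.v *)
Require Import Defs.
From HB Require Import structures.
From mathcomp Require Import all_boot all_order all_algebra.
From mathcomp Require Import all_classical all_reals all_analysis.
From mathcomp Require Import ring lra.
Import Order.TTheory GRing.Theory Num.Theory.
Import numFieldNormedType.Exports.
Local Open Scope ring_scope.
Local Open Scope classical_set_scope.

Definition phic {R : realType} (lam c o d : R) : R :=
  - c * d + lam * (`|o + d| - `|o|).

Lemma phic0 (R : realType) (lam c o : R) : phic lam c o 0 = 0.
Proof. by rewrite /phic addr0 subrr !mulr0 addr0. Qed.

Lemma normNge {R : realType} (x : R) : - x <= `|x|.
Proof. by rewrite -normrN ler_norm. Qed.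

Lemma phic_conv (R : realType) (lam c o d t : R) :
  0 <= lam -> 0 <= t <= 1 -> phic lam c o (t * d) <= t * phic lam c o d.
Proof.
move=> hl /andP[t0 t1].
have hn : `|o + t * d| <= t * `|o + d| + (1 - t) * `|o|.
  have -> : o + t * d = t * (o + d) + (1 - t) * o by ring.
  apply: (le_trans (ler_normD _ _)).
  rewrite !normrM (ger0_norm t0) (ger0_norm (_ : 0 <= 1 - t)) //; lra.
rewrite /phic.
have : lam * `|o + t * d| <= lam * (t * `|o + d| + (1 - t) * `|o|).
  by apply: ler_wpM2l.
move=> h. 
have e : t * (- c * d + lam * (`|o + d| - `|o|)) =
   - c * (t * d) + lam * (t * `|o + d| + (1 - t) * `|o|) - lam * `|o| by ring.
rewrite e. lra.
Qed.

Lemma phic_local (R : realType) (lam c o K d : R) :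
  0 <= lam -> 0 <= K ->
  (forall s, 0 <= phic lam c o s + K * s ^+ 2) -> 0 <= phic lam c o d.
Proof.
move=> hl hK hs.
rewrite leNgt; apply/negP => hf.
set f := phic lam c o d in hf.
set M := K * d ^+ 2.
have hM : 0 <= M by rewrite /M mulr_ge0 // sqr_ge0.
have hMf : 0 < M - f by lra.
set t := - f / (2 * (M - f)).
have ht0 : 0 < t by rewrite /t divr_gt0 //; lra.
have ht1 : t <= 1.
  by rewrite /t ler_pdivrMr; lra.
have h1 := hs (t * d).
have h2 : phic lam c o (t * d) <= t * f.
  by apply: phic_conv => //; rewrite (ltW ht0).
have h3 : t * M <= - f / 2.
  rewrite /t mulrAC ler_pdivrMr; last lra.
  have -> : - f / 2 * (2 * (M - f)) = - f * M + f * f by field.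
  have : 0 <= f * f by rewrite -expr2 sqr_ge0.
  lra.
have h4 : t * (f + t * M) < 0.
  by rewrite pmulr_rlt0 //; lra.
have e : K * (t * d) ^+ 2 = t * (t * M) by rewrite /M; ring.
rewrite e in h1.
have : phic lam c o (t * d) + t * (t * M) <= t * (f + t * M).
  rewrite mulrDr; lra.
lra.
Qed.

Lemma phic_kkt (R : realType) (lam c o d : R) :
  0 <= lam ->
  (if o != 0 then c == lam * Num.sg o else `|c| <= lam) ->
  0 <= phic lam c o d.
Proof.
move=> hl; rewrite /phic.
have n1 := ler_norm (o + d); have n2 := normNge (o + d).
case: ifP => [/eqP ho /eqP -> | /negbFE /eqP -> hc].
  case: (ltgtP o 0) ho => // ho _.
    rewrite (ltr0_sg ho) (ltr0_norm ho).
    have : 0 <= lam * (`|o + d| + (o + d)) by rewrite mulr_ge0 //; lra.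
    have e : - (lam * -1) * d + lam * (`|o + d| - - o) = lam * (`|o + d| + (o + d)) by ring.
    by rewrite e.
  rewrite (gtr0_sg ho) (gtr0_norm ho).
  have : 0 <= lam * (`|o + d| - (o + d)) by rewrite mulr_ge0 //; lra.
  have e : - (lam * 1) * d + lam * (`|o + d| - o) = lam * (`|o + d| - (o + d)) by ring.
  by rewrite e.
rewrite add0r normr0 subr0.
have h1 : c * d <= `|c| * `|d| by rewrite -normrM ler_norm.
have h2 : `|c| * `|d| <= lam * `|d| by rewrite ler_wpM2r.
rewrite mulNr; lra.
Qed.
Lemma obj_expand (R : realType) (n p : nat) (X : 'M[R]_(n,p)) (y : 'cV[R]_n)
  (lam : R) (b D : 'cV[R]_p) : (0 < n)%N ->
  lasso_obj X y lam (b + D) = lasso_obj X y lam b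
   + \sum_(j < p) phic lam (xtr X (resid X y b) j / n%:R) (b j 0) (D j 0)
   + (\sum_(i < n) ((X *m D) i 0) ^+ 2) / (2 * n%:R).
Proof.
move=> n0.
have nz : (n%:R : R) != 0 by rewrite pnatr_eq0 -lt0n.
set r := resid X y b.
have er : forall i, resid X y (b + D) i 0 = r i 0 - (X *m D) i 0.
  by move=> i; rewrite /r /resid mulmxDr opprD addrA !mxE.
have eq1 : \sum_(i < n) resid X y (b + D) i 0 ^+ 2 =
   \sum_(i < n) r i 0 ^+ 2 - 2 * \sum_(i < n) r i 0 * (X *m D) i 0
   + \sum_(i < n) ((X *m D) i 0) ^+ 2.
  rewrite mulr_sumr -sumrB -big_split /=; apply: eq_bigr => i _.
  rewrite er; ring.
have eq2 : \sum_(i < n) r i 0 * (X *m D) i 0 =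
    \sum_(j < p) xtr X r j * D j 0.
  rewrite /xtr.
  under eq_bigr do rewrite [(X *m D) _ _]mxE mulr_sumr.
  rewrite exchange_big /=; apply: eq_bigr => j _.
  rewrite mulr_suml; apply: eq_bigr => i _; ring.
have eq3 : \sum_(j < p) phic lam (xtr X r j / n%:R) (b j 0) (D j 0) =
   - (\sum_(j < p) xtr X r j * D j 0) / n%:R
   + lam * (\sum_(j < p) `|(b + D) j 0| - \sum_(j < p) `|b j 0|).
  rewrite -sumrB mulr_sumr -sumrN mulr_suml -big_split /=.
  by apply: eq_bigr => j _; rewrite /phic !mxE; field.
rewrite /lasso_obj -/r eq1 eq2 eq3.
field.
by [].
Qed.

Lemma kkt_in_A (R : realType) (n p : nat) (X : 'M[R]_(n,p)) (y : 'cV[R]_n)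
  (lam : R) (A : {set 'I_p}) (b : 'cV[R]_p) (j : 'I_p) : (0 < n)%N -> 0 <= lam ->
  restricted_solution X y lam A b -> j \in A ->
  forall d, 0 <= phic lam (xtr X (resid X y b) j / n%:R) (b j 0) d.
Proof.
move=> n0 hl [hsupp hopt] jA d.
have n2 : 0 < 2 * (n%:R : R) by rewrite mulr_gt0 // ltr0n.
apply: (@phic_local _ _ _ _ ((\sum_(i < n) X i j ^+ 2) / (2 * n%:R))) => //.
  by rewrite divr_ge0 ?(ltW n2) // sumr_ge0 // => i _; rewrite sqr_ge0.
move=> s.
set D : 'cV[R]_p := s *: delta_mx j 0.
have hD : forall k, D k 0 = if k == j then s else 0.
  move=> k; rewrite !mxE eqxx andbT; case: (k == j); rewrite /= ?mulr1 ?mulr0 //.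
have hsup : supported_on A (b + D).
  move=> k kA; rewrite [(b + D) _ _]mxE hsupp // hD.
  case: eqP => [kj|]; last by rewrite addr0.
  by move: kA; rewrite kj jA.
have := hopt _ hsup.
rewrite obj_expand //.
rewrite (bigD1 j) //= big1; last first.
  move=> k /negbTE kj; by rewrite hD kj phic0.
rewrite hD eqxx addr0.
have hq : \sum_(i < n) ((X *m D) i 0) ^+ 2 = s ^+ 2 * \sum_(i < n) X i j ^+ 2.
  rewrite mulr_sumr; apply: eq_bigr => i _.
  by rewrite /D -scalemxAr -colE !mxE exprMn.
rewrite hq.
set P := phic _ _ _ _.
set Q := \sum_(i < n) X i j ^+ 2.
have -> : s ^+ 2 * Q / (2 * n%:R) = Q / (2 * n%:R) * s ^+ 2 by ring.
lra.
Qed.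

Lemma opt_on_S (R : realType) (n p : nat) (X : 'M[R]_(n,p)) (y : 'cV[R]_n)
  (lam : R) (S A : {set 'I_p}) (out b' : 'cV[R]_p) : (0 < n)%N -> 0 <= lam ->
  restricted_solution X y lam A out ->
  (forall j, j \in S -> j \notin A -> kkt_ok X y lam out j) ->
  supported_on S b' -> lasso_obj X y lam out <= lasso_obj X y lam b'.
Proof.
move=> n0 hl hr hk hb'.
have hsupp := hr.1.
have -> : b' = out + (b' - out) by rewrite addrC subrK.
rewrite obj_expand // -addrA lerDl.
apply: addr_ge0.
  apply: sumr_ge0 => j _.
  case jA: (j \in A); first exact: kkt_in_A hr jA _.
  case jS: (j \in S).
    apply: phic_kkt => //; have := hk j jS (negbT jA); by rewrite /kkt_ok.
  by rewrite !mxE hb' ?jS // hsupp ?jA // subrr phic0.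
apply: divr_ge0; first by apply: sumr_ge0 => i _; rewrite sqr_ge0.
by rewrite mulr_ge0 // ler0n.
Qed.

Lemma uniq_sol (R : realType) (n p : nat) (X : 'M[R]_(n,p)) (y : 'cV[R]_n)
  (lam : R) (S : {set 'I_p}) (out bhat : 'cV[R]_p) :
  lasso_strictly_convex X y lam -> lasso_solution X y lam bhat ->
  supported_on S bhat ->
  (forall b', supported_on S b' -> lasso_obj X y lam out <= lasso_obj X y lam b') ->
  out = bhat.
Proof.
move=> hsc hsol hS hopt.
apply/eqP; apply/negP => /negP hne.
have h1 := hopt _ hS.
have ht : 0 < (2^-1 : R) < 1.
  apply/andP; split; first by rewrite invr_gt0.
  by rewrite invf_lt1 // ltr1n.
have := hsc _ _ hne _ ht.
have := hsol (2^-1 *: out + (1 - 2^-1) *: bhat).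
set m := lasso_obj _ _ _ (_ + _).
set Fo := lasso_obj X y lam out.
set Fb := lasso_obj X y lam bhat.
move=> h2 h3.
have h4 : 2^-1 * Fo <= 2^-1 * Fb by rewrite ler_wpM2l // invr_ge0 ler0n.
lra.
Qed.

Lemma lim_uniq (R : realType) p (a : algorithm R p) A b0 (u v : 'cV[R]_p) :
  a A b0 @ \oo --> u -> a A b0 @ \oo --> v -> u = v.
Proof.
move=> hu hv.
apply: (cvg_unique _ hu hv).
first [exact: norm_hausdorff | exact: metric_hausdorff | exact: pseudoMetricNormedZModType_hausdorff].
Qed.

Theorem theorem3p1 (R : realType) (n p : nat) (X : 'M[R]_(n, p)) (y : 'cV[R]_n)
  (lamk lam : R) (bprev bhat : 'cV[R]_p) (S : {set 'I_p}) (a : algorithm R p) :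
  (0 < n)%N -> 0 < lam -> lam < lamk ->
  (* bprev = betahat(lam_k), the solution at the previous lambda *)
  lasso_solution X y lamk bprev ->
  (* the lasso at lam = lam_{k+1} is strictly convex, with optimum bhat *)
  lasso_strictly_convex X y lam ->
  lasso_solution X y lam bhat ->
  (* the algorithm converges to the optimum of the strictly convex problems *)
  converges_when_strictly_convex a X y lam ->
  (* S is the safe set of a safe rule at lam *)
  (forall j, j \notin S -> bhat j 0 = 0) ->
  (* the algorithm with HSSR screening (warm-started at betahat(lam_k))
     converges, and any output it produces is bhat *)
  (exists out, hssr_run a X y lam S (hssr_kept X y lam lamk bprev S) bprev out) /\
  (forall out, hssr_run a X y lam S (hssr_kept X y lam lamk bprev S) bprev out ->
     out = bhat).
Proof.
move=> n0 hl0 _ _ hsc hsol hconv hS.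
have hl : 0 <= lam by exact: ltW.
have conv : forall A b, exists2 bA, restricted_solution X y lam A bA & a A b @ \oo --> bA.
  move=> A b; apply: hconv => b1 b2 _ _; exact: hsc.
split.
  suff ex : forall k A b, (#|~: A| < k)%N -> exists out, hssr_run a X y lam S A b out.
    by apply: (ex #|~: hssr_kept X y lam lamk bprev S|.+1).
  elim=> [//|k IH] A b hk.
  have [bA _ hc] := conv A b.
  case: (eqVneq (kkt_violators X y lam S A bA) finset.set0) => hv.
    by exists bA; apply: hssr_stop.
  have [j hj] := set0Pn _ hv.
  have jA : j \notin A by move: hj; rewrite !inE => /andP[/andP[]].
  have hk' : (#|~: (A :|: kkt_violators X y lam S A bA)| < k)%N.
    rewrite ltnS in hk; apply: (leq_trans _ hk); apply: proper_card; apply/properP; split.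
      by rewrite finset.setCS finset.subsetUl.
    exists j; first by rewrite !inE.
    by rewrite !inE negbK; apply/orP; right; move: hj; rewrite !inE.
  have [out hout] := IH _ bA hk'.
  by exists out; apply: hssr_rerun hout.
move=> out h; elim: h => [A b b' hc hv | A b b' out' _ _ _ IH] //.
have [bA hr hc'] := conv A b.
have eb : b' = bA by exact: lim_uniq hc hc'.
rewrite eb.
apply: (@uniq_sol _ _ _ _ _ _ S _ _ hsc hsol hS).
move=> b2 hb2; apply: (@opt_on_S _ _ _ _ _ _ S A _ _ n0 hl hr) => // j jS jA.
apply/negPn/negP => hk.
have : j \in kkt_violators X y lam S A bA by rewrite !inE jS jA hk.
by rewrite -eb hv inE.
Qed.
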